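(* Let $\mathcal{N}\in\mathbb{C}^{n\times n}$ be Hermitian positive definite. Then $\Pi(P_\sharp,R_\sharp)=P_\sharp(R_\sharp^*AP_\sharp)^{-1}R_\sharp^*A$ is $\mathcal{N}$-orthogonal if and only if $V_r^*\mathcal{N}V_r$ is CF-block diagonal.
   Context: Let $A,M\in\mathbb{C}^{n\times n}$ be nonsingular with $M^{-1}A$ and $M^{-*}A^*$ diagonalizable. Let $V_r=[\bm v_{r,1},\dots,\bm v_{r,n}]$ and $V_l=[\bm v_{l,1},\dots,\bm v_{l,n}]$ be invertible matrices of right and left generalized eigenvectors of the pencil $(A,M)$, i.e. $AV_r=MV_r\Lambda$ and $V_l^*A=\Lambda V_l^*M$ with $\Lambda=\mathrm{diag}(\lambda_1,\dots,\lambda_n)$, chosen so that $V_l^*AV_r=D_a$ and $V_l^*MV_r=D_m$ are diagonal, and with the eigenvalues ordered so that $|1-\lambda_1|\ge\cdots\ge|1-\lambda_n|\ge0$. Fix $n_c\in\{1,\dots,n\}$, $n_f=n-n_c$. A matrix is CF-block diagonal if it is block diagonal with respect to the partition of indices into $\{1,\dots,n_c\}$ and $\{n_c+1,\dots,n\}$. $P_\sharp,R_\sharp\in\mathbb{C}^{n\times n_c}$ are any matrices with $\mathrm{range}(P_\sharp)=\mathrm{span}\{\bm v_{r,1},\dots,\bm v_{r,n_c}\}$ and $\mathrm{range}(R_\sharp)=\mathrm{span}\{\bm v_{l,1},\dots,\bm v_{l,n_c}\}$. For Hermitian positive definite $\mathcal{N}$, $\langle x,y\rangle_{\mathcal N}=y^*\mathcal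 N x$; a matrix $Z$ is $\mathcal N$-orthogonal if $\langle Zx,y\rangle_{\mathcal N}=\langle x,Zy\rangle_{\mathcal N}$ for all $x,y$. *)

(* Defs.v *)
From HB Require Import structures.
From mathcomp Require Import all_boot all_order all_algebra.
Set Implicit Arguments. Unset Strict Implicit. Unset Printing Implicit Defensive.
Import Order.TTheory GRing.Theory Num.Theory.
Local Open Scope ring_scope.

Definition ctr (C : numClosedFieldType) m n (X : 'M[C]_(m, n)) : 'M[C]_(n, m) :=
  (map_mx Num.conj X)^T.

Definition hpd (C : numClosedFieldType) n (N : 'M[C]_n) : Prop :=
  ctr N = N /\ forall x : 'cV[C]_n, x != 0 -> 0 < (ctr x *m N *m x) 0 0.

Definition ipN (C : numClosedFieldType) n (N : 'M[C]_n) (x y : 'cV[C]_n) : C :=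
  (ctr y *m N *m x) 0 0.

Definition N_orthogonal (C : numClosedFieldType) n (N Z : 'M[C]_n) : Prop :=
  forall x y : 'cV[C]_n, ipN N (Z *m x) y = ipN N x (Z *m y).

Definition CF_block_diag (C : numClosedFieldType) nc nf (B : 'M[C]_(nc + nf)) : Prop :=
  ursubmx B = 0 /\ dlsubmx B = 0.

Definition Pi (C : numClosedFieldType) n k (A : 'M[C]_n) (P R : 'M[C]_(n, k)) : 'M[C]_n :=
  P *m invmx (ctr R *m A *m P) *m ctr R *m A.

(* Main.v *)
Require Import Defs.
From HB Require Import structures.
From mathcomp Require Import all_boot all_order all_algebra.
Import Order.TTheory GRing.Theory Num.Theory.
Local Open Scope ring_scope.
Set Implicit Arguments. Unset Strict Implicit.

Section H.
Context {C : numClosedFieldType}.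

Lemma ctr_mul m n p (A : 'M[C]_(m, n)) (B : 'M[C]_(n, p)) :
  ctr (A *m B) = ctr B *m ctr A.
Proof. by rewrite /ctr map_mxM trmx_mul. Qed.

Lemma ctrK m n (A : 'M[C]_(m, n)) : ctr (ctr A) = A.
Proof. by apply/matrixP => i j; rewrite !mxE conjCK. Qed.

Lemma ctr1 n : ctr (1%:M : 'M[C]_n) = 1%:M.
Proof. by rewrite /ctr map_mx1 trmx1. Qed.

Lemma ctr_unit n (A : 'M[C]_n) : A \in unitmx -> ctr A \in unitmx.
Proof.
move=> HA; have := @mulmx1_unit _ _ (ctr A) (ctr (invmx A)).
by rewrite -ctr_mul mulVmx // ctr1 => /(_ erefl) [].
Qed.

Lemma ctrL nc nf : ctr (col_mx (1%:M : 'M[C]_nc) (0 : 'M[C]_(nf, nc))) = row_mx 1%:M 0.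
Proof. by rewrite /ctr map_col_mx map_mx1 map_mx0 tr_col_mx trmx1 trmx0. Qed.

Lemma invmxMu n (A B : 'M[C]_n) : A \in unitmx -> B \in unitmx ->
  invmx (A *m B) = invmx B *m invmx A.
Proof.
move=> HA HB; have HAB : A *m B \in unitmx by rewrite unitmx_mul HA HB.
rewrite -[RHS](mulmxK HAB) [_ *m (A *m B)]mulmxA -[invmx B *m invmx A *m A]mulmxA.
by rewrite mulVmx // mulmx1 mulVmx // mul1mx.
Qed.

Lemma bil_eq n (K1 K2 : 'M[C]_n) :
  (forall x y : 'cV[C]_n, (ctr y *m K1 *m x) 0 0 = (ctr y *m K2 *m x) 0 0) <-> K1 = K2.
Proof.
split; last by move=> ->.
move=> H; apply/matrixP => i j.
have E : ctr (delta_mx i 0 : 'cV[C]_n) = delta_mx 0 i.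
  by apply/matrixP => a b; rewrite !mxE conjC_nat andbC.
have := H (delta_mx j 0) (delta_mx i 0).
by rewrite E -!rowE -!colE !mxE.
Qed.

Lemma lsubL nc nf m (B : 'M[C]_(m, nc + nf)) :
  lsubmx B = B *m col_mx 1%:M 0.
Proof. by rewrite -{2}[B]hsubmxK mul_row_col mulmx1 mulmx0 addr0. Qed.

Lemma colspace nc nf (V : 'M[C]_(nc + nf)) (P : 'M[C]_(nc + nf, nc)) :
  V \in unitmx -> ((P^T) == (lsubmx V)^T)%MS ->
  exists2 X : 'M[C]_nc, X \in unitmx & P = V *m col_mx 1%:M 0 *m X.
Proof.
move=> HV /andP [/submxP [D HD] /submxP [D' HD']].
have EP : P = lsubmx V *m D^T by rewrite -[P]trmxK HD trmx_mul trmxK.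
have EV : lsubmx V = P *m D'^T by rewrite -[lsubmx V]trmxK HD' trmx_mul trmxK.
exists D^T; last by rewrite EP lsubL.
have : lsubmx V *m (1%:M - D^T *m D'^T) = 0.
  by rewrite mulmxBr mulmx1 mulmxA -EP -EV subrr.
rewrite lsubL -mulmxA => /(congr1 (mulmx (invmx V))).
rewrite mulKmx // mulmx0 mul_col_mx mul1mx mul0mx => /eqP.
rewrite col_mx_eq0 => /andP [/eqP H _].
have : D^T *m D'^T = 1%:M by apply/eqP; rewrite eq_sym -subr_eq0 H.
by move/mulmx1_unit => [].
Qed.

End H.
Unset Implicit Arguments.
Theorem lemma3p2 (C : numClosedFieldType) (nc nf : nat) (Hnc : (0 < nc)%N)
  (A M Vr Vl : 'M[C]_(nc + nf)) (lam : 'I_(nc + nf) -> C)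
  (HA : A \in unitmx) (HM : M \in unitmx)
  (HdiagA : diagonalizable (invmx M *m A))
  (HdiagAs : diagonalizable (invmx (ctr M) *m ctr A))
  (HVr : Vr \in unitmx) (HVl : Vl \in unitmx)
  (Hr : A *m Vr = M *m Vr *m diag_mx (\row_i lam i))
  (Hl : ctr Vl *m A = diag_mx (\row_i lam i) *m ctr Vl *m M)
  (HDa : is_diag_mx (ctr Vl *m A *m Vr))
  (HDm : is_diag_mx (ctr Vl *m M *m Vr))
  (Hord : forall i j : 'I_(nc + nf), (i <= j)%N -> `|1 - lam j| <= `|1 - lam i|)
  (P R : 'M[C]_(nc + nf, nc))
  (HP : ((P^T) == (lsubmx Vr)^T)%MS)
  (HR : ((R^T) == (lsubmx Vl)^T)%MS)
  (N : 'M[C]_(nc + nf)) (HN : hpd N) :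
  N_orthogonal N (Pi A P R) <-> CF_block_diag (ctr Vr *m N *m Vr).
Proof.
set L := col_mx (1%:M : 'M[C]_nc) (0 : 'M[C]_(nf, nc)).
have [X HX EP] := colspace HVr HP.
have [Y HY ER] := colspace HVl HR.
set D := ctr Vl *m A *m Vr.
have HD : D \in unitmx by rewrite !unitmx_mul ctr_unit // HA HVr.
have Dur : ursubmx D = 0.
  apply/matrixP => i j; rewrite [LHS]mxE [LHS]mxE [RHS]mxE; move/is_diag_mxP: HDa => HDa'; apply: HDa' => /=.
  by rewrite neq_ltn (leq_trans (ltn_ord i)) ?leq_addr.
have Ddl : dlsubmx D = 0.
  apply/matrixP => i j; rewrite [LHS]mxE [LHS]mxE [RHS]mxE; move/is_diag_mxP: HDa => HDa'; apply: HDa' => /=.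
  by rewrite neq_ltn (leq_trans (ltn_ord j)) ?leq_addr ?orbT.
set D1 := ulsubmx D.
have EDb : D = block_mx D1 0 0 (drsubmx D) by rewrite -Dur -Ddl submxK.
have HD1 : D1 \in unitmx.
  move: HD; rewrite !unitmxE EDb det_ublock unitrM => /andP [] //.
have ES : ctr L *m D = row_mx D1 0.
  by rewrite ctrL EDb mul_row_block !mul1mx !mul0mx ?mulmx0 ?addr0.
have ESL : row_mx D1 0 *m L = D1 by rewrite mul_row_col mulmx1 mulmx0 addr0.
have ET : ctr R *m A *m P = ctr Y *m D1 *m X.
  rewrite ER EP !ctr_mul -ESL -ES /D !mulmxA.
  done.
have EPV : Pi A P R *m Vr = Vr *m (L *m ctr L).
  rewrite /Pi ET !invmxMu ?ctr_unit ?unitmx_mul ?ctr_unit ?HY ?HD1 //.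
  rewrite ER !ctr_mul EP.
  have -> : Vr *m L *m X *m (invmx X *m (invmx D1 *m invmx (ctr Y))) *m
    (ctr Y *m (ctr L *m ctr Vl)) *m A *m Vr =
    Vr *m L *m (X *m invmx X) *m invmx D1 *m (invmx (ctr Y) *m ctr Y) *m (ctr L *m D).
    by rewrite !mulmxA.
  rewrite mulmxV // mulVmx; last exact: ctr_unit.
  rewrite mulmx1 mulmx1 ES -mulmxA mul_mx_row mulVmx // mulmx0 ctrL.
  by rewrite mulmxA.
move: (Pi A P R) EPV => Pm EPV.
set G := ctr Vr *m N *m Vr.
set E := L *m ctr L.
have step1 : N_orthogonal N Pm <-> N *m Pm = ctr Pm *m N.
  rewrite /N_orthogonal /ipN.
  have B := bil_eq (N *m Pm) (ctr Pm *m N).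
  split => H.
    by apply/B => x y; move: (H x y); rewrite !ctr_mul !mulmxA.
  by move=> x y; move/B: H => /(_ x y); rewrite !ctr_mul !mulmxA.
have key1 : ctr Vr *m (N *m Pm) *m Vr = G *m E.
  by rewrite -!mulmxA EPV !mulmxA.
have key2 : ctr Vr *m (ctr Pm *m N) *m Vr = E *m G.
  have -> : ctr Vr *m (ctr Pm *m N) *m Vr = ctr (Pm *m Vr) *m N *m Vr.
    by rewrite ctr_mul !mulmxA.
  by rewrite EPV !ctr_mul ctrK /E /G !mulmxA.
have step2 : N *m Pm = ctr Pm *m N <-> G *m E = E *m G.
  rewrite -key1 -key2; split; first by move=> ->.
  move=> H.
  have HcV : ctr Vr \in unitmx by exact: ctr_unit.
  rewrite -[N *m Pm](mulKmx HcV) -[ctr Vr *m (N *m Pm)](mulmxK HVr) H.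
  by rewrite mulmxK // mulKmx.
have EGE : G *m E = block_mx (ulsubmx G) 0 (dlsubmx G) 0.
  rewrite /E ctrL mulmxA -{1}[G]submxK mul_block_col mul_col_row.
  by rewrite !mulmx1 !mulmx0 !addr0.
have EEG : E *m G = block_mx (ulsubmx G) (ursubmx G) 0 0.
  rewrite /E ctrL -mulmxA -{1}[G]submxK mul_row_block mul_col_row.
  by rewrite !mul1mx !mul0mx !addr0.
split.
  move/step1/step2; rewrite EGE EEG => /eq_block_mx [_ H1 H2 _].
  by rewrite /CF_block_diag -/G -H1 H2.
rewrite /CF_block_diag -/G => -[H1 H2].
by apply/step1/step2; rewrite EGE EEG H1 H2.
Qed.
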